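(* Assume the continuum hypothesis. Let $(\mathbb{R},\mathcal{C})$ be a category base such that: (a) it is point-meager; (b) it satisfies the countable chain condition; (c) $\mathcal{C}$ is linearly invariant; (d) $\operatorname{card}(\mathcal{C})\le 2^{\aleph_0}$; and (e) $\mathbb{R}$ is abundant in $(\mathbb{R},\mathcal{C})$. Then there exist sets $E,F\subseteq\mathbb{R}$ such that (i) both $E$ and $F$ are rare sets in the category base $(\mathbb{R},\mathcal{C})$; (ii) both $E$ and $F$ are vector spaces over the field $\mathbb{Q}$ of rational numbers (i.e. $\mathbb{Q}$-linear subspaces of $\mathbb{R}$); (iii) $\mathbb{R}=E+F=\{e+f:e\in E,\ f\in F\}$ and $E\cap F=\{0\}$.
   Context: A category base is a pair $(X,\mathcal{C})$ with $X$ a nonempty set and $\mathcal{C}$ a family of subsets of $X$ whose nonempty members (called regions) satisfy: (1) $X=\bigcup\mathcal{C}$; (2) for every region $A$ and every nonempty family $\mathcal{D}$ of pairwise disjoint regions with $\operatorname{card}(\mathcal{D})<\operatorname{card}(\mathcal{C})$: (i) if $A\cap\bigcup\mathcal{D}$ contains a region, then there is $D\in\mathcal{D}$ such that $A\cap D$ contains a region; (ii) if $A\cap\bigcup\mathcal{D}$ contains no region, then there is a region $B\subseteq A$ disjoint from every region in $\mathcal{D}$. A set $S\subseteq X$ is singular if every region contains a subregion disjoint from $S$; a set is meager if it is a countable union of singular sets, and abundant otherwise. The base is point-meager if every singleton is meager. It satisfies the countable chain condition (c.c.c.) if every family of pairwise disjoint regions is at most countable. For $X=\mathbb{R}$, $\mathcal{C}$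 is linearly invariant if for every $E\in\mathcal{C}$, every $r\in\mathbb{R}$ and every nonzero $\lambda\in\mathbb{R}$, the sets $E+r=\{x+r:x\in E\}$ and $\lambda E=\{\lambda x:x\in E\}$ belong to $\mathcal{C}$. A set $R\subseteq X$ is a rare set in $(X,\mathcal{C})$ if $R$ is uncountable and $R\cap M$ is countable for every meager set $M$ of $(X,\mathcal{C})$. *)

(* Defs.v *)
From Stdlib Require Import Reals QArith.
Open Scope R_scope.

Definition card_le {T U : Type} (A : T -> Prop) (B : U -> Prop) : Prop :=
  exists f : T -> U, (forall x, A x -> B (f x)) /\
    (forall x y, A x -> A y -> f x = f y -> x = y).

Definition card_lt {T U : Type} (A : T -> Prop) (B : U -> Prop) : Prop :=
  card_le A B /\ ~ card_le B A.

Definition countable {T : Type} (A : T -> Prop) : Prop :=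
  card_le A (fun _ : nat => True).

Definition CH : Prop :=
  forall S : R -> Prop, countable S \/ card_le (fun _ : R => True) S.

Definition family := (R -> Prop) -> Prop.

Definition subset (A B : R -> Prop) : Prop := forall x, A x -> B x.
Definition disjoint (A B : R -> Prop) : Prop := forall x, ~ (A x /\ B x).

Definition region (C : family) (A : R -> Prop) : Prop :=
  C A /\ exists x, A x.

Definition contains_region (C : family) (S : R -> Prop) : Prop :=
  exists B, region C B /\ subset B S.

Definition pairwise_disjoint (D : family) : Prop :=
  forall A B, D A -> D B -> A <> B -> disjoint A B.

Definition bigunion (D : family) : R -> Prop := fun x => exists A, D A /\ A x.

Definition category_base (C : family) : Prop :=
  (forall x : R, exists A, C A /\ A x) /\
  (forall A (D : family),
     region C A ->
     (exists B, D B) ->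
     (forall B, D B -> region C B) ->
     pairwise_disjoint D ->
     card_lt D C ->
     (contains_region C (fun x => A x /\ bigunion D x) ->
        exists B, D B /\ contains_region C (fun x => A x /\ B x)) /\
     (~ contains_region C (fun x => A x /\ bigunion D x) ->
        exists B, region C B /\ subset B A /\
          forall E, D E -> disjoint B E)).

Definition singular (C : family) (S : R -> Prop) : Prop :=
  forall A, region C A -> exists B, region C B /\ subset B A /\ disjoint B S.

Definition meager (C : family) (M : R -> Prop) : Prop :=
  exists S : nat -> (R -> Prop), (forall n, singular C (S n)) /\
    (forall x, M x <-> exists n, S n x).

Definition abundant (C : family) (S : R -> Prop) : Prop := ~ meager C S.

Definition point_meager (C : family) : Prop :=
  forall x : R, meager C (fun y => y = x).

Definition ccc (C : family) : Prop :=
  forall D : family, (forall A, D A -> region C A) -> pairwise_disjoint D ->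
    countable D.

Definition linearly_invariant (C : family) : Prop :=
  forall E, C E -> forall r lam : R, lam <> 0 ->
    C (fun y => exists x, E x /\ y = x + r) /\
    C (fun y => exists x, E x /\ y = lam * x).

Definition rare (C : family) (S : R -> Prop) : Prop :=
  ~ countable S /\
  forall M, meager C M -> countable (fun x => S x /\ M x).

Definition Q_subspace (E : R -> Prop) : Prop :=
  E 0 /\ (forall x y, E x -> E y -> E (x + y)) /\
  (forall (q : Q) x, E x -> E (Q2R q * x)).

(* Main.v *)
Require Import Defs.
From Stdlib Require Import Reals QArith.
From Stdlib Require Import ZArith Qreals Cantor ClassicalEpsilon Classical
  FunctionalExtensionality PropExtensionality Wellfounded Lra Lia.
Open Scope R_scope.

Module WO.
From mathcomp Require Import ssreflect ssrfun ssrbool eqtype boolp wochoice.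
From mathcomp Require Import Rstruct.

Lemma R_wo : exists W : R -> R -> Prop,
  (forall P : R -> Prop, (exists x, P x) -> exists z, P z /\ forall x, P x -> W z x) /\
  (forall x y, W x y -> W y x -> x = y).
Proof.
have [W HW] := well_ordering_principle R.
have memE : forall (P : R -> Prop) z, (z \in (fun z => `[< P z >] : bool)) <-> P z.
  by move=> P z; split; [move=> H; apply/asboolP; exact H | move=> H; apply/asboolP].
have refl : forall x, W x x.
  move=> x.
  have ne : nonempty (fun z => `[< z = x >] : bool) by exists x; apply/memE.
  have [z [[/memE Hz Hl] _]] := HW _ ne.
  rewrite -{1}Hz; exact: (Hl x (proj2 (memE _ _) erefl)).
exists (fun x y => W x y); split.
- move=> P [x Px].
  have ne : nonempty (fun z => `[< P z >] : bool).
    by exists x; apply/memE.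
  have [z [[Hz Hl] _]] := HW _ ne.
  exists z; split; first by apply/memE.
  move=> y Py; apply: Hl; exact/memE.
- move=> x y Hxy Hyx.
  have ne : nonempty (fun z => `[< z = x \/ z = y >] : bool).
    by exists x; apply/memE; left.
  have [z [[Hz Hl] Hu]] := HW _ ne.
  have Hx : z = x.
    apply: Hu; split; first by apply/memE; left.
    by move=> w /memE [->|->].
  have Hy : z = y.
    apply: Hu; split; first by apply/memE; right.
    by move=> w /memE [->|->].
  by rewrite -Hx -Hy.
Qed.
End WO.
Import WO.
Module Z5.
From mathcomp Require Import ssreflect ssrfun ssrbool eqtype boolp classical_sets.
Local Open Scope classical_set_scope.
Lemma zorn_fam (T : Type) (P : (T -> Prop) -> Prop) :
  (forall F : (T -> Prop) -> Prop, (forall X, F X -> P X) ->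
     (forall X Y, F X -> F Y -> (forall a, X a -> Y a) \/ (forall a, Y a -> X a)) ->
     P (fun a => exists X, F X /\ X a)) ->
  exists A, P A /\ forall B, (forall a, A a -> B a) -> (exists a, B a /\ ~ A a) -> ~ P B.
Proof.
move=> H.
have [A [PA HA]] : exists A, P A /\ forall B, proper A B -> ~ P B.
  apply: Zorn_bigcup => F FP Ftot.
  have -> : (\bigcup_(X in F) X) = (fun a => exists X, F X /\ X a).
    apply/funext => a; apply/propext; split; first by case=> X ? ?; exists X.
    by case=> X [? ?]; exists X.
  apply: H; first exact: FP.
  move=> X Y FX FY; case: (Ftot X Y FX FY) => h; [left|right] => a; exact: h.
exists A; split => // B AB [a [Ba nAa]]; apply: HA; split; first exact: AB.
by move=> BA; apply: nAa; apply: BA.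
Qed.
End Z5.
Import Z5.

Definition QR (r : R) : Prop := exists q : Q, r = Q2R q.

Lemma QR0 : QR 0. Proof. exists 0%Q. unfold Q2R; simpl; lra. Qed.
Lemma QR1 : QR 1. Proof. exists 1%Q. unfold Q2R; simpl; lra. Qed.
Lemma QRadd r s : QR r -> QR s -> QR (r + s).
Proof. intros [a ->] [b ->]. exists (a + b)%Q. now rewrite Q2R_plus. Qed.
Lemma QRmul r s : QR r -> QR s -> QR (r * s).
Proof. intros [a ->] [b ->]. exists (a * b)%Q. now rewrite Q2R_mult. Qed.
Lemma QRopp r : QR r -> QR (- r).
Proof. intros [a ->]. exists (- a)%Q. now rewrite Q2R_opp. Qed.
Lemma QRinv r : QR r -> r <> 0 -> QR (/ r).
Proof.
  intros [a ->] H. exists (/ a)%Q. rewrite Q2R_inv; auto.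
  intro E. apply H. rewrite (Qeq_eqR _ _ E). unfold Q2R; simpl; lra.
Qed.
Lemma QRsub r s : QR r -> QR s -> QR (r - s).
Proof. intros. apply QRadd; auto. now apply QRopp. Qed.
Lemma QRdiv r s : QR r -> QR s -> s <> 0 -> QR (r / s).
Proof. intros. apply QRmul; auto. now apply QRinv. Qed.

Inductive span (S : R -> Prop) : R -> Prop :=
| sp0 : span S 0
| spS : forall r v z, QR r -> S v -> span S z -> span S (r * v + z).

Lemma span_add S x y : span S x -> span S y -> span S (x + y).
Proof.
  induction 1; intros Hy.
  - now rewrite Rplus_0_l.
  - replace (r * v + z + y) with (r * v + (z + y)) by ring.
    constructor; auto.
Qed.

Lemma span_scale S c x : QR c -> span S x -> span S (c * x).
Proof.
  intros Hc; induction 1.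
  - rewrite Rmult_0_r; constructor.
  - replace (c * (r * v + z)) with ((c * r) * v + c * z) by ring.
    constructor; auto. now apply QRmul.
Qed.

Lemma span_incl S v : S v -> span S v.
Proof.
  intros H. replace v with (1 * v + 0) by ring. constructor; auto using QR1. constructor.
Qed.

Lemma span_mono (S T : R -> Prop) x : (forall v, S v -> T v) -> span S x -> span T x.
Proof. intros H; induction 1; constructor; auto. Qed.

Lemma span_opp S x : span S x -> span S (- x).
Proof. intros. replace (- x) with ((-1) * x) by ring. apply span_scale; auto.
  apply QRopp, QR1. Qed.

Lemma span_sub S x y : span S x -> span S y -> span S (x - y).
Proof. intros. apply span_add; auto. now apply span_opp. Qed.

Lemma span_add1 (S : R -> Prop) a z :
  span (fun v => S v \/ v = a) z <-> exists e r, span S e /\ QR r /\ z = e + r * a.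
Proof.
  split.
  - induction 1 as [|r v z Hr Hv Hz IH].
    + exists 0, 0. repeat split; [constructor| apply QR0 | ring].
    + destruct IH as (e & s & He & Hs & ->). destruct Hv as [Hv | ->].
      * exists (r * v + e), s. repeat split; auto. constructor; auto. ring.
      * exists e, (r + s). repeat split; auto. now apply QRadd. ring.
  - intros (e & r & He & Hr & ->). apply span_add.
    + apply (span_mono S); auto.
    + apply span_scale; auto. apply span_incl; auto.
Qed.

Definition enum (A : R -> Prop) : Prop :=
  exists g : nat -> R, forall z, A z -> exists n, g n = z.

Lemma enum_sub (A B : R -> Prop) : (forall z, A z -> B z) -> enum B -> enum A.
Proof. intros H [g Hg]. exists g. intros z Hz; auto. Qed.

Lemma enum_union (A : nat -> R -> Prop) :
  (forall n, enum (A n)) -> enum (fun z => exists n, A n z).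
Proof.
  intros H.
  set (G := fun n => proj1_sig (constructive_indefinite_description _ (H n))).
  assert (HG : forall n z, A n z -> exists m, G n m = z).
  { intros n. unfold G. destruct (constructive_indefinite_description _ (H n)); simpl; auto. }
  exists (fun k => G (fst (of_nat k)) (snd (of_nat k))).
  intros z [n Hz]. destruct (HG n z Hz) as [m Hm].
  exists (to_nat (n, m)). now rewrite cancel_of_to.
Qed.

Lemma enum_image (A : R -> Prop) (x : R -> R) :
  enum A -> enum (fun z => exists s, A s /\ z = x s).
Proof.
  intros [g Hg]. exists (fun n => x (g n)). intros z (s & Hs & ->).
  destruct (Hg s Hs) as [n <-]. now exists n.
Qed.

Lemma enum_add1 (A : R -> Prop) t : enum A -> enum (fun z => A z \/ z = t).
Proof.
  intros [g Hg]. exists (fun n => match n with O => t | S n => g n end).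
  intros z [Hz | ->]. - destruct (Hg z Hz) as [n <-]. now exists (S n). - now exists O.
Qed.

Definition zsur (k : nat) : Z := (Z.of_nat (fst (of_nat k)) - Z.of_nat (snd (of_nat k)))%Z.
Lemma zsur_surj z : exists k, zsur k = z.
Proof.
  exists (to_nat (Z.to_nat z, Z.to_nat (- z))). unfold zsur. rewrite cancel_of_to. simpl. lia.
Qed.

Lemma enum_QR : enum QR.
Proof.
  exists (fun n => Q2R (Qmake (zsur (fst (of_nat n))) (Pos.of_nat (snd (of_nat n))))).
  intros r [[z p] ->]. destruct (zsur_surj z) as [k Hk].
  exists (to_nat (k, Pos.to_nat p)). rewrite cancel_of_to. simpl. now rewrite Hk, Pos2Nat.id.
Qed.

Fixpoint Lk (P : R -> Prop) (k : nat) : R -> Prop :=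
  match k with
  | O => fun z => z = 0
  | S k => fun z => exists r v w, QR r /\ P v /\ Lk P k w /\ z = r * v + w
  end.

Lemma enum_span (P : R -> Prop) : enum P -> enum (span P).
Proof.
  intros HP.
  assert (HL : forall k, enum (Lk P k)).
  { induction k as [|k IH].
    - exists (fun _ => 0). intros z ->. now exists O.
    - destruct enum_QR as [gq Hq]. destruct HP as [gs Hs]. destruct IH as [gl Hl].
      exists (fun n => gq (fst (of_nat n)) * gs (fst (of_nat (snd (of_nat n))))
                     + gl (snd (of_nat (snd (of_nat n))))).
      intros z (r & v & w & Hr & Hv & Hw & ->).
      destruct (Hq r Hr) as [a <-]. destruct (Hs v Hv) as [b <-]. destruct (Hl w Hw) as [c <-].
      exists (to_nat (a, to_nat (b, c))). rewrite cancel_of_to; cbn [fst snd]; rewrite cancel_of_to; reflexivity. }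
  apply (enum_sub _ (fun z => exists k, Lk P k z)).
  - induction 1 as [|r v z Hr Hv Hz IH].
    + now exists O.
    + destruct IH as [k Hk]. exists (Datatypes.S k). simpl. exists r, v, z. auto.
  - now apply enum_union.
Qed.

Lemma enum_countable (A : R -> Prop) : enum A -> countable A.
Proof.
  intros [g Hg].
  exists (fun z => epsilon (inhabits O) (fun n => g n = z)). split; [auto|].
  intros x y Hx Hy E.
  pose proof (epsilon_spec (inhabits O) (fun n => g n = x) (Hg x Hx)) as H1.
  pose proof (epsilon_spec (inhabits O) (fun n => g n = y) (Hg y Hy)) as H2.
  simpl in *. rewrite <- H1, <- H2. now rewrite E.
Qed.

Lemma countable_enum (A : R -> Prop) : countable A -> enum A.
Proof.
  intros [h [_ Hh]].
  exists (fun n => epsilon (inhabits 0) (fun z => A z /\ h z = n)).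
  intros z Hz. exists (h z).
  pose proof (epsilon_spec (inhabits 0) (fun w => A w /\ h w = h z) (ex_intro _ z (conj Hz eq_refl))) as [H1 H2].
  apply Hh; auto.
Qed.


Lemma fam_ext (C : (R -> Prop) -> Prop) (A B : R -> Prop) : C A -> (forall z, A z <-> B z) -> C B.
Proof.
  intros H E. replace B with A; auto.
  apply functional_extensionality; intro z; apply propositional_extensionality; auto.
Qed.

Section Meager.
Variable C : (R -> Prop) -> Prop.
Hypothesis pm : point_meager C.
Hypothesis li : linearly_invariant C.
Hypothesis ab : abundant C (fun _ => True).

Lemma C_affine A c d : C A -> c <> 0 -> C (fun y => exists x, A x /\ y = c * x + d).
Proof.
  intros HA Hc.
  destruct (li A HA 0 c Hc) as [_ H1].
  destruct (li _ H1 d 1 ltac:(lra)) as [H2 _].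
  apply (fam_ext C _ _ H2). intros z; split.
  - intros (w & (x & Hx & ->) & ->). exists x; split; auto.
  - intros (x & Hx & ->). exists (c * x); split; auto. exists x; auto.
Qed.

Lemma singular_sub A B : (forall z, A z -> B z) -> singular C B -> singular C A.
Proof.
  intros H HB A0 HR. destruct (HB A0 HR) as (B0 & H1 & H2 & H3).
  exists B0; split; [auto|split; [auto|]]. intros z [Hz Hz']. apply (H3 z); auto.
Qed.

Lemma singular_affine S c d : singular C S -> c <> 0 ->
  singular C (fun z => S (c * z + d)).
Proof.
  intros HS Hc A [HA [a Ha]].
  assert (HA' : region C (fun y => exists x, A x /\ y = c * x + d)).
  { split. now apply C_affine. exists (c * a + d), a; auto. }
  destruct (HS _ HA') as (B & [HB [b Hb]] & HBA & HBS).
  exists (fun z => B (c * z + d)). repeat split.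
  - apply (fam_ext C (fun y => exists x, B x /\ y = (/ c) * x + (- d / c))).
    + apply C_affine; auto. now apply Rinv_neq_0_compat.
    + intros z; split.
      * intros (x & Hx & ->). replace (c * (/ c * x + - d / c) + d) with x by (field; auto). auto.
      * intros Hz. exists (c * z + d); split; auto. field; auto.
  - destruct (HBA b Hb) as (x & Hx & ->). exists x; auto.
  - intros z Hz. destruct (HBA _ Hz) as (x & Hx & E).
    replace z with x; auto. apply Rmult_eq_reg_l with c; auto. lra.
  - intros z [H1 H2]. apply (HBS (c * z + d)); auto.
Qed.

Lemma meager_sub A B : (forall z, A z -> B z) -> meager C B -> meager C A.
Proof.
  intros H [S [HS HB]].
  exists (fun n z => S n z /\ A z). split.
  - intros n. apply (singular_sub _ (S n)); [tauto | auto].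
  - intros z; split.
    + intros Hz. destruct (proj1 (HB z) (H z Hz)) as [n Hn]. exists n; auto.
    + intros [n [_ Hz]]; auto.
Qed.

Lemma singular_meager S : singular C S -> meager C S.
Proof. intros H. exists (fun _ => S). split; auto. intros z; split; [exists O|intros [_ ?]]; auto. Qed.

Lemma meager_union (A : nat -> R -> Prop) :
  (forall n, meager C (A n)) -> meager C (fun z => exists n, A n z).
Proof.
  intros H.
  set (G := fun n => proj1_sig (constructive_indefinite_description _ (H n))).
  assert (HG : forall n, (forall m, singular C (G n m)) /\ (forall z, A n z <-> exists m, G n m z)).
  { intros n. unfold G. destruct (constructive_indefinite_description _ (H n)); simpl; auto. }
  exists (fun k => G (fst (of_nat k)) (snd (of_nat k))). split.
  - intros k. apply HG.
  - intros z; split.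
    + intros [n Hz]. destruct (proj1 (proj2 (HG n) z) Hz) as [m Hm].
      exists (to_nat (n, m)). now rewrite cancel_of_to.
    + intros [k Hk]. exists (fst (of_nat k)). apply (proj2 (HG _)). eauto.
Qed.

Lemma enum_meager A : enum A -> meager C A.
Proof.
  intros [g Hg]. apply (meager_sub _ (fun z => exists n, (fun n y => y = g n) n z)).
  - intros z Hz. destruct (Hg z Hz) as [n <-]. now exists n.
  - apply meager_union. intros n. apply pm.
Qed.

Lemma meager_affine M c d : meager C M -> c <> 0 -> meager C (fun z => M (c * z + d)).
Proof.
  intros [S [HS HM]] Hc. exists (fun n z => S n (c * z + d)). split.
  - intros n. now apply singular_affine.
  - intros z. apply HM.
Qed.

Lemma not_meager_exists M : meager C M -> exists a, ~ M a.
Proof.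
  intros HM. apply NNPP. intros H. apply ab. apply (meager_sub _ M); auto.
  intros z _. apply NNPP. intros Hz. apply H. eauto.
Qed.

Lemma R_uncountable : ~ countable (fun _ : R => True).
Proof.
  intros H. apply ab. apply enum_meager. now apply countable_enum.
Qed.

Lemma generic (M K : R -> Prop) (c1 d1 c2 d2 : nat -> R) :
  meager C M -> enum K ->
  exists a, ~ K a /\ (forall n, c1 n <> 0 -> ~ M (c1 n * a + d1 n))
                  /\ (forall n, c2 n <> 0 -> ~ M (c2 n * a + d2 n)).
Proof.
  intros HM HK.
  set (Bad := fun a => K a \/ (exists n, c1 n <> 0 /\ M (c1 n * a + d1 n))
                            \/ (exists n, c2 n <> 0 /\ M (c2 n * a + d2 n))).
  assert (HB : meager C Bad).
  { apply (meager_sub _ (fun z => exists n, (fun n z =>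
        match n with O => K z | S n =>
          (c1 (fst (of_nat n)) <> 0 /\ M (c1 (fst (of_nat n)) * z + d1 (fst (of_nat n)))) \/
          (c2 (snd (of_nat n)) <> 0 /\ M (c2 (snd (of_nat n)) * z + d2 (snd (of_nat n)))) end) n z)).
    - intros z [Hz | [[n Hn] | [n Hn]]].
      + exists O; auto.
      + exists (S (to_nat (n, O))). rewrite cancel_of_to. simpl. auto.
      + exists (S (to_nat (O, n))). rewrite cancel_of_to. simpl. auto.
    - apply meager_union. intros [|n].
      + now apply enum_meager.
      + apply (meager_sub _ (fun z => exists k, (fun k z => match k with O =>
            c1 (fst (of_nat n)) <> 0 /\ M (c1 (fst (of_nat n)) * z + d1 (fst (of_nat n)))
          | _ => c2 (snd (of_nat n)) <> 0 /\ M (c2 (snd (of_nat n)) * z + d2 (snd (of_nat n))) end) k z)).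
        * intros z [Hz|Hz]; [exists O | exists 1%nat]; auto.
        * apply meager_union. intros [|k].
          -- destruct (Req_EM_T (c1 (fst (of_nat n))) 0) as [E|E].
             ++ apply (meager_sub _ (fun _ => False)); [tauto|]. apply enum_meager.
                exists (fun _ => 0). tauto.
             ++ apply (meager_sub _ (fun z => M (c1 (fst (of_nat n)) * z + d1 (fst (of_nat n))))); [tauto|].
                now apply meager_affine.
          -- destruct (Req_EM_T (c2 (snd (of_nat n))) 0) as [E|E].
             ++ apply (meager_sub _ (fun _ => False)); [tauto|]. apply enum_meager.
                exists (fun _ => 0). tauto.
             ++ apply (meager_sub _ (fun z => M (c2 (snd (of_nat n)) * z + d2 (snd (of_nat n))))); [tauto|].
                now apply meager_affine. }
  destruct (not_meager_exists _ HB) as [a Ha]. exists a. unfold Bad in Ha.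
  repeat split.
  - intro; apply Ha; auto.
  - intros n Hn HM'. apply Ha. right; left. eauto.
  - intros n Hn HM'. apply Ha. right; right. eauto.
Qed.

End Meager.


Lemma pow2_ge n : INR n <= 2 ^ n.
Proof.
  induction n. simpl; lra. rewrite S_INR. simpl.
  assert (1 <= 2 ^ n) by (apply pow_R1_Rle; lra). lra.
Qed.

Lemma phi_inj x y : (forall n, up (x * 2 ^ n) = up (y * 2 ^ n)) -> x = y.
Proof.
  intros H. apply NNPP; intro Hne.
  set (d := Rabs (x - y)).
  assert (Hd : 0 < d) by (apply Rabs_pos_lt; lra).
  set (z := up (/ d)).
  destruct (archimed (/ d)) as [A1 A2].
  assert (Hz : (0 <= z)%Z).
  { apply le_IZR. assert (0 < / d) by (apply Rinv_0_lt_compat; lra). fold z in A1. lra. }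
  set (n := Z.to_nat z).
  assert (Hn : INR n = IZR z) by (unfold n; rewrite INR_IZR_INZ, Z2Nat.id; auto).
  pose proof (pow2_ge n) as Hp.
  destruct (archimed (x * 2 ^ n)) as [B1 B2]. destruct (archimed (y * 2 ^ n)) as [C1 C2].
  rewrite (H n) in B1, B2.
  assert (Habs : Rabs ((x - y) * 2 ^ n) < 1) by (apply Rabs_def1; lra).
  rewrite Rabs_mult, (Rabs_pos_eq (2 ^ n)) in Habs by (apply pow_le; lra).
  fold d in Habs. fold z in A1.
  assert (/ d * d = 1) by (field; lra).
  assert (/ d < 2 ^ n) by lra.
  assert (d * / d < d * 2 ^ n) by (apply Rmult_lt_compat_l; lra).
  lra.
Qed.

Fixpoint Ps (b : nat -> bool) (n : nat) : R :=
  match n with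
  | O => 0
  | S n => Ps b n + (if b n then 2 else 0) / 3 ^ (S n)
  end.

Lemma Ps_mono b n m : (n <= m)%nat -> Ps b n <= Ps b m.
Proof.
  induction 1. lra. cbn [Ps]. assert (0 < 3 ^ S m) by (apply pow_lt; lra).
  assert (0 <= (if b m then 2 else 0) / 3 ^ S m).
  { destruct (b m); unfold Rdiv; [apply Rmult_le_pos; [lra| left; now apply Rinv_0_lt_compat]| lra]. }
  lra.
Qed.

Lemma Ps_upper b n m : (n <= m)%nat -> Ps b m <= Ps b n + (1 / 3 ^ n - 1 / 3 ^ m).
Proof.
  induction 1. lra. simpl.
  assert (0 < 3 ^ m) by (apply pow_lt; lra).
  assert ((if b m then 2 else 0) / (3 * 3 ^ m) <= 2 / (3 * 3 ^ m)).
  { destruct (b m). lra. unfold Rdiv. rewrite Rmult_0_l. apply Rmult_le_pos. lra.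
    left. apply Rinv_0_lt_compat. lra. }
  assert (1 / 3 ^ m - 1 / (3 * 3 ^ m) = 2 / (3 * 3 ^ m)) by (field; lra).
  lra.
Qed.

Lemma Ps_bound b n : Ps b n <= 1.
Proof.
  pose proof (Ps_upper b 0 n ltac:(lia)). simpl in H.
  assert (0 < 3 ^ n) by (apply pow_lt; lra).
  assert (0 < 1 / 3 ^ n) by (apply Rdiv_lt_0_compat; lra). lra.
Qed.

Lemma Ps_bd b : bound (fun r => exists n, r = Ps b n).
Proof. exists 1. intros r [n ->]. apply Ps_bound. Qed.
Lemma Ps_ne b : exists r, (fun r => exists n, r = Ps b n) r.
Proof. exists 0. exists O. reflexivity. Qed.

Definition kappa (b : nat -> bool) : R :=
  proj1_sig (completeness (fun r => exists n, r = Ps b n) (Ps_bd b) (Ps_ne b)).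

Lemma kappa_ge b n : Ps b n <= kappa b.
Proof.
  unfold kappa. destruct completeness as [m [H1 H2]]. simpl. apply H1. eauto.
Qed.

Lemma kappa_le b r : (forall n, Ps b n <= r) -> kappa b <= r.
Proof.
  intros H. unfold kappa. destruct completeness as [m [H1 H2]]. simpl. apply H2.
  intros x [n ->]. auto.
Qed.

Lemma Ps_agree b b' n : (forall k, (k < n)%nat -> b k = b' k) -> Ps b n = Ps b' n.
Proof.
  induction n; intros H. reflexivity. simpl. rewrite IHn by (intros; apply H; lia).
  now rewrite H by lia.
Qed.

Lemma kappa_sep b b' n : (forall k, (k < n)%nat -> b k = b' k) -> b n = true -> b' n = false ->
  kappa b' < kappa b.
Proof.
  intros Hag H1 H2.
  assert (Hp : 0 < 3 ^ S n) by (apply pow_lt; lra).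
  assert (E1 : Ps b (S n) = Ps b n + 2 / 3 ^ S n) by (simpl; rewrite H1; reflexivity).
  assert (E2 : Ps b' (S n) = Ps b n) by (simpl; rewrite H2, (Ps_agree b' b n) by (intros; symmetry; auto); unfold Rdiv; ring).
  assert (kappa b' <= Ps b n + 1 / 3 ^ S n).
  { apply kappa_le. intros m. destruct (le_lt_dec m (S n)).
    - pose proof (Ps_mono b' m (S n) l). assert (0 < 1 / 3 ^ S n) by (apply Rdiv_lt_0_compat; lra). lra.
    - pose proof (Ps_upper b' (S n) m ltac:(lia)).
      assert (0 < 3 ^ m) by (apply pow_lt; lra).
      assert (0 < 1 / 3 ^ m) by (apply Rdiv_lt_0_compat; lra). lra. }
  pose proof (kappa_ge b (S n)).
  assert (1 / 3 ^ S n < 2 / 3 ^ S n) by (unfold Rdiv; apply Rmult_lt_compat_r; [apply Rinv_0_lt_compat|]; lra).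
  lra.
Qed.

Lemma kappa_inj b b' : kappa b = kappa b' -> forall n, b n = b' n.
Proof.
  intros E n. induction n as [n IH] using lt_wf_ind.
  destruct (b n) eqn:H1, (b' n) eqn:H2; auto.
  - pose proof (kappa_sep b b' n IH H1 H2). lra.
  - pose proof (kappa_sep b' b n (fun k Hk => eq_sym (IH k Hk)) H2 H1). lra.
Qed.

Definition zsur' (k : nat) : Z := (Z.of_nat (fst (of_nat k)) - Z.of_nat (snd (of_nat k)))%Z.
Lemma zsur'_surj z : exists k, zsur' k = z.
Proof.
  exists (to_nat (Z.to_nat z, Z.to_nat (- z))). unfold zsur'. rewrite cancel_of_to. simpl. lia.
Qed.

Definition enc (h : nat -> R) : R :=
  kappa (fun m => let p := of_nat m in
                  let q := of_nat (snd p) in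
                  Z.eqb (up (h (fst p) * 2 ^ (fst q))) (zsur' (snd q))).

Lemma enc_inj h h' : enc h = enc h' -> h = h'.
Proof.
  intros E. apply functional_extensionality. intros i. apply phi_inj. intros j.
  pose proof (kappa_inj _ _ E) as K. simpl in K.
  destruct (zsur'_surj (up (h i * 2 ^ j))) as [k Hk].
  specialize (K (to_nat (i, to_nat (j, k)))).
  rewrite cancel_of_to in K. cbn [fst snd] in K. rewrite cancel_of_to in K. cbn [fst snd] in K.
  rewrite Hk, Z.eqb_refl in K. symmetry in K. apply Z.eqb_eq in K. congruence.
Qed.

Definition dec (t : R) : nat -> R := epsilon (inhabits (fun _ => 0)) (fun h => enc h = t).

Lemma dec_enc h : dec (enc h) = h.
Proof.
  unfold dec. apply enc_inj.
  apply (epsilon_spec (inhabits (fun _ : nat => 0)) (fun h' => enc h' = enc h)). eauto.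
Qed.


Lemma countable_exact {T : Type} (D : T -> Prop) (t0 : T) : D t0 -> countable D ->
  exists d : nat -> T, (forall n, D (d n)) /\ forall A, D A -> exists n, d n = A.
Proof.
  intros H0 [g [_ Hg]].
  assert (Hc : forall n, exists A, D A /\ ((exists B, D B /\ g B = n) -> g A = n)).
  { intros n. destruct (classic (exists B, D B /\ g B = n)) as [[B [HB E]] | Hn].
    - exists B; auto.
    - exists t0; split; auto. intros; contradiction. }
  exists (fun n => proj1_sig (constructive_indefinite_description _ (Hc n))). split.
  - intros n. destruct (constructive_indefinite_description _ (Hc n)) as [A [HA HA']]; simpl; auto.
  - intros A HA. exists (g A). destruct (constructive_indefinite_description _ (Hc (g A))) as [B [HB HB']]; simpl.
    apply Hg; auto. apply HB'. exists A; auto.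
Qed.

Section Cofinal.
Variable C : (R -> Prop) -> Prop.
Hypothesis cb : category_base C.
Hypothesis cc : ccc C.
Variable f : (R -> Prop) -> R.
Hypothesis f_inj : forall A B, C A -> C B -> f A = f B -> A = B.

Lemma some_region : exists A, region C A.
Proof. destruct (proj1 cb 0) as [A [HA H0]]. exists A; split; eauto. Qed.

Lemma cofinal_family S : singular C S ->
  exists d : nat -> (R -> Prop), (forall n, region C (d n)) /\ (forall n, disjoint (d n) S)
    /\ singular C (fun z => ~ exists n, d n z).
Proof.
  intros HS.
  destruct some_region as [A0 HA0]. destruct (HS A0 HA0) as (B0 & HB0 & _ & HB0S).
  destruct (classic (countable C)) as [Hcnt | Hunc].
  - set (D := fun A => region C A /\ disjoint A S).
    assert (HD : countable D).
    { destruct Hcnt as [g [_ Hg]]. exists g. split; auto. intros x y [[Hx _] _] [[Hy _] _]. auto. }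
    destruct (countable_exact D B0 (conj HB0 HB0S) HD) as [d [Hd1 Hd2]].
    exists d. split; [intros n; apply Hd1|split; [intros n; apply Hd1|]].
    intros A HA. destruct (HS A HA) as (B & HB & HBA & HBS).
    exists B. split; auto. split; auto. intros z [Hz Hn]. apply Hn.
    destruct (Hd2 B (conj HB HBS)) as [n <-]. eauto.
  - set (P := fun (D : (R -> Prop) -> Prop) =>
             (forall A, D A -> region C A /\ disjoint A S) /\ pairwise_disjoint D).
    destruct (Z5.zorn_fam (R -> Prop) P) as [D [[HD1 HD2] Hmax]].
    { intros F HF Htot. split.
      - intros A (X & FX & XA). apply (proj1 (HF X FX)); auto.
      - intros A B (X & FX & XA) (Y & FY & YB) AB.
        destruct (Htot X Y FX FY) as [H | H].
        + apply (proj2 (HF Y FY)); auto.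
        + apply (proj2 (HF X FX)); auto. }
    assert (Hno : forall B, region C B -> disjoint B S -> (forall E, D E -> disjoint B E) -> False).
    { intros B HB HBS HBD.
      destruct (classic (D B)) as [HDB | HDB].
      - destruct HB as [_ [z Hz]]. apply (HBD B HDB z); auto.
      - apply (Hmax (fun X => D X \/ X = B)).
        + intros; auto.
        + exists B; auto.
        + split.
          * intros A [HA | ->]; auto.
          * intros X Y [HX | ->] [HY | ->] XY.
            -- apply HD2; auto.
            -- intros z [h1 h2]. apply (HBD X HX z). tauto.
            -- apply HBD; auto.
            -- contradiction. }
    assert (Hne : exists B, D B).
    { apply NNPP. intros Hn. apply (Hno B0 HB0 HB0S). intros E HE. exfalso; eauto. }
    assert (HDc : countable D) by (apply cc; [intros A HA; apply HD1; auto | auto]).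
    destruct Hne as [E0 HE0].
    destruct (countable_exact D E0 HE0 HDc) as [d [Hd1 Hd2]].
    exists d. split; [intros n; apply HD1, Hd1|split; [intros n; apply HD1, Hd1|]].
    intros A HA.
    assert (Hlt : card_lt D C).
    { split.
      - exists (fun A => A). split; [intros x Hx; apply HD1; auto | auto].
      - intros [h [Hh1 Hh2]]. apply Hunc. destruct HDc as [g [_ Hg]].
        exists (fun A => g (h A)). split; [auto|]. intros x y Hx Hy E.
        apply Hh2; auto. }
    destruct (proj2 cb A D HA (ex_intro _ E0 HE0) (fun B HB => proj1 (HD1 B HB)) HD2 Hlt) as [Hi Hii].
    destruct (classic (contains_region C (fun x => A x /\ bigunion D x))) as [Hc | Hc].
    + destruct (Hi Hc) as (B & HB & (B' & HB' & HB'sub)).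
      exists B'. split; auto. split.
      * intros z Hz. apply (HB'sub z Hz).
      * intros z [Hz Hn]. apply Hn. destruct (Hd2 B HB) as [n <-]. exists n. apply (HB'sub z Hz).
    + destruct (Hii Hc) as (B & HB & HBA & HBD).
      destruct (HS B HB) as (B' & HB' & HB'B & HB'S).
      exfalso. apply (Hno B' HB' HB'S). intros E HE z [h1 h2]. apply (HBD E HE z). auto.
Qed.

Definition Nset (t : R) : R -> Prop :=
  fun z => ~ exists A, (C A /\ exists n, f A = dec t n) /\ A z.
Definition Mb (t : R) : R -> Prop := fun z => singular C (Nset t) /\ Nset t z.

Lemma Mb_singular t : singular C (Mb t).
Proof.
  intros A HA. destruct (classic (singular C (Nset t))) as [H | H].
  - destruct (H A HA) as (B & HB & HBA & HBN). exists B; split; [exact HB| split; [exact HBA|]].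
    intros z [h1 [_ h2]]. apply (HBN z); auto.
  - exists A. split; [exact HA| split; [intros z Hz; exact Hz| ]]. intros z [_ [h _]]. contradiction.
Qed.

Lemma Mb_cofinal S : singular C S -> exists t, forall z, S z -> Mb t z.
Proof.
  intros HS. destruct (cofinal_family S HS) as (d & Hd1 & Hd2 & Hd3).
  exists (enc (fun n => f (d n))).
  assert (HN : forall z, Nset (enc (fun n => f (d n))) z <-> ~ exists n, d n z).
  { intros z. unfold Nset. rewrite dec_enc. split.
    - intros H [n Hn]. apply H. exists (d n). split; auto. split. apply Hd1. eauto.
    - intros H (A & (HA & n & E) & Hz). apply H. exists n.
      replace (d n) with A; auto. apply f_inj; auto. apply Hd1. }
  intros z Hz. split.
  - apply (singular_sub C _ _ (fun z => proj1 (HN z)) Hd3).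
  - apply HN. intros [n Hn]. apply (Hd2 n z). auto.
Qed.

End Cofinal.

Lemma good_order (ch : CH) : exists lt : R -> R -> Prop,
  well_founded lt /\ (forall x y z, lt x y -> lt y z -> lt x z) /\ (forall x, ~ lt x x) /\
  (forall x y, x <> y -> lt x y \/ lt y x) /\ (forall t, countable (fun s => lt s t)).
Proof.
  destruct R_wo as [W [Hmin Hanti]].
  assert (Hrefl : forall x, W x x).
  { intros x. destruct (Hmin (fun z => z = x) (ex_intro _ x eq_refl)) as [z [-> Hz]]. auto. }
  assert (Htot : forall x y, W x y \/ W y x).
  { intros x y. destruct (Hmin (fun z => z = x \/ z = y) (ex_intro _ x (or_introl eq_refl))) as [z [[-> | ->] Hz]].
    - left; auto. - right; auto. }
  assert (Htrans : forall x y z, W x y -> W y z -> W x z).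
  { intros x y z H1 H2.
    destruct (Hmin (fun w => w = x \/ w = y \/ w = z) (ex_intro _ x (or_introl eq_refl))) as [m [Hm Hm']].
    destruct Hm as [-> | [-> | ->]].
    - apply Hm'. right; right; reflexivity.
    - assert (x = y) by (apply Hanti; [exact H1 | apply Hm'; left; reflexivity]). subst y. exact H2.
    - assert (y = z) by (apply Hanti; [exact H2 | apply Hm'; right; left; reflexivity]). subst y. exact H1. }
  set (lt0 := fun x y => W x y /\ x <> y).
  assert (wf0 : well_founded lt0).
  { intros a. apply NNPP. intros Hna.
    destruct (Hmin (fun x => ~ Acc lt0 x) (ex_intro _ a Hna)) as [z [Hz Hz']].
    apply Hz. constructor. intros y [Hy1 Hy2]. apply NNPP. intros Hy.
    apply Hy2. apply Hanti; [exact Hy1 | exact (Hz' y Hy)]. }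
  assert (Hmain : forall g : R -> R, (forall x y, g x = g y -> x = y) ->
      (forall t, countable (fun s => lt0 s (g t))) ->
      exists lt : R -> R -> Prop,
      well_founded lt /\ (forall x y z, lt x y -> lt y z -> lt x z) /\ (forall x, ~ lt x x) /\
      (forall x y, x <> y -> lt x y \/ lt y x) /\ (forall t, countable (fun s => lt s t))).
  { intros g Hg Hc. exists (fun x y => lt0 (g x) (g y)). split; [|split; [|split; [|split]]].
    - apply (wf_inverse_image R R lt0 g wf0).
    - intros x y z [H1 H2] [H3 H4]. split.
      + exact (Htrans _ _ _ H1 H3).
      + intros E. apply H2. apply Hanti; [exact H1|]. rewrite E. exact H3.
    - intros x [_ H]. apply H. reflexivity.
    - intros x y Hxy. destruct (Htot (g x) (g y)) as [H|H]; [left|right]; split; try exact H;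
        intro E; apply Hxy; apply Hg; [exact E | symmetry; exact E].
    - intros t. destruct (Hc t) as [h [_ Hh]].
      exists (fun s => h (g s)). split; [intros; exact I|]. intros x y Hx Hy E. apply Hg. apply Hh; assumption. }
  destruct (classic (forall t, countable (fun s => lt0 s t))) as [Hall | Hnot].
  - apply (Hmain (fun x => x)); [intros x y E; exact E | exact Hall].
  - apply not_all_ex_not in Hnot.
    destruct (Hmin (fun t => ~ countable (fun s => lt0 s t)) Hnot) as [p [Hp Hp']].
    destruct (ch (fun s => lt0 s p)) as [Hc | [g [Hg1 Hg2]]]; [contradiction|].
    apply (Hmain g).
    + intros x y E. apply Hg2; [exact I | exact I | exact E].
    + intros t. apply NNPP. intros Hnc. specialize (Hp' _ Hnc).
      destruct (Hg1 t I) as [H1 H2]. apply H2. apply Hanti; assumption.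
Qed.


Lemma span_ext (S T : R -> Prop) z : (forall v, S v <-> T v) -> (span S z <-> span T z).
Proof. intros H; split; apply span_mono; firstorder. Qed.

Lemma enum_or (X Y : R -> Prop) : enum X -> enum Y -> enum (fun v => X v \/ Y v).
Proof.
  intros [g1 H1] [g2 H2].
  exists (fun n => match fst (of_nat n) with O => g1 (snd (of_nat n)) | _ => g2 (snd (of_nat n)) end).
  intros z [Hz | Hz].
  - destruct (H1 z Hz) as [n <-]. exists (to_nat (O, n)). now rewrite cancel_of_to.
  - destruct (H2 z Hz) as [n <-]. exists (to_nat (1%nat, n)). now rewrite cancel_of_to.
Qed.

Section Main.
Variable C : (R -> Prop) -> Prop.
Hypothesis cb : category_base C.
Hypothesis pm : point_meager C.
Hypothesis cc : ccc C.
Hypothesis li : linearly_invariant C.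
Hypothesis ab : abundant C (fun _ => True).
Variable f : (R -> Prop) -> R.
Hypothesis f_inj : forall A B, C A -> C B -> f A = f B -> A = B.
Variable lt : R -> R -> Prop.
Hypothesis lt_wf : well_founded lt.
Hypothesis lt_trans : forall x y z, lt x y -> lt y z -> lt x z.
Hypothesis lt_irr : forall x, ~ lt x x.
Hypothesis lt_tot : forall x y, x <> y -> lt x y \/ lt y x.
Hypothesis lt_cnt : forall t, countable (fun s => lt s t).

Definition le s t := lt s t \/ s = t.
Definition MB := Mb C f.
Definition U t := fun z => exists s, le s t /\ MB s z.

Lemma U_meager t : meager C (U t).
Proof.
  destruct (enum_add1 _ t (countable_enum _ (lt_cnt t))) as [gs Hgs].
  apply (meager_sub C _ (fun z => exists n, MB (gs n) z)).
  - intros z (s & Hs & Hz). destruct (Hgs s Hs) as [n <-]. eauto.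
  - apply meager_union; auto. intros n. apply singular_meager, Mb_singular.
Qed.

Definition Spec t (X Y : R -> Prop) (a b : R) : Prop :=
   ~ (exists e g r, span X e /\ span Y g /\ QR r /\ a = e + g + r * b) /\
   ~ (exists e g, span X e /\ span Y g /\ b = e + g) /\
   (exists e g r1 r2, span X e /\ span Y g /\ QR r1 /\ QR r2 /\ t = e + r1 * a + g + r2 * b) /\
   (forall e r, span X e -> QR r -> r <> 0 -> ~ U t (e + r * a)) /\
   (forall g r, span Y g -> QR r -> r <> 0 -> ~ U t (g + r * b)).

Lemma span_XY (X Y : R -> Prop) (P : R -> Prop) e g :
  (forall v, X v -> P v) -> (forall v, Y v -> P v) -> span X e -> span Y g -> span P (e + g).
Proof. intros HX HY He Hg. apply span_add; [apply (span_mono X) | apply (span_mono Y)]; auto. Qed.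

Lemma spec_exists t X Y : enum X -> enum Y -> exists p : R * R, Spec t X Y (fst p) (snd p).
Proof.
  intros HX HY.
  destruct (enum_span _ HX) as [gE HgE]. destruct (enum_span _ HY) as [gF HgF].
  destruct enum_QR as [gQ HgQ].
  assert (HM := U_meager t).
  assert (find : forall (gG : nat -> R) (G : R -> Prop), (forall z, G z -> exists n, gG n = z) ->
            forall e r, G e -> QR r -> exists n, gQ (fst (of_nat n)) = r /\ gG (snd (of_nat n)) = e).
  { intros gG G HG e r He Hr. destruct (HgQ r Hr) as [i <-]. destruct (HG e He) as [j <-].
    exists (to_nat (i, j)). rewrite cancel_of_to. auto. }
  destruct (classic (exists e g, span X e /\ span Y g /\ t = e + g)) as [Ht | Ht].
  -
    destruct (generic C pm li ab (U t) (span (fun v => X v \/ Y v))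
                (fun n => gQ (fst (of_nat n))) (fun n => gF (snd (of_nat n)))
                (fun _ => 0) (fun _ => 0) HM) as (b & Hb1 & Hb2 & _).
    { apply enum_span. apply enum_or; auto. }
    destruct (generic C pm li ab (U t) (span (fun v => X v \/ Y v \/ v = b))
                (fun n => gQ (fst (of_nat n))) (fun n => gE (snd (of_nat n)))
                (fun _ => 0) (fun _ => 0) HM) as (a & Ha1 & Ha2 & _).
    { apply enum_span. apply (enum_sub _ (fun v => (X v \/ Y v) \/ v = b)); [tauto|].
      apply enum_add1, enum_or; auto. }
    exists (a, b). simpl. split; [|split; [|split; [|split]]].
    + intros (e & g & r & He & Hg & Hr & E). apply Ha1. rewrite E. apply span_add.
      * apply (span_XY X Y); auto.
      * apply span_scale; auto. apply span_incl; auto.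
    + intros (e & g & He & Hg & E). apply Hb1. rewrite E. apply (span_XY X Y); auto.
    + destruct Ht as (e & g & He & Hg & E). exists e, g, 0, 0. repeat split; auto using QR0.
      rewrite E; ring.
    + intros e r He Hr Hr0 HU. destruct (find gE _ HgE e r He Hr) as (n & E1 & E2).
      apply (Ha2 n); rewrite ?E1, ?E2; [exact Hr0 | rewrite Rplus_comm; exact HU].
    + intros g r Hg Hr Hr0 HU. destruct (find gF _ HgF g r Hg Hr) as (n & E1 & E2).
      apply (Hb2 n); rewrite ?E1, ?E2; [exact Hr0 | rewrite Rplus_comm; exact HU].
  - destruct (generic C pm li ab (U t) (span (fun v => X v \/ Y v \/ v = t))
                (fun n => gQ (fst (of_nat n))) (fun n => gE (snd (of_nat n)))
                (fun n => - gQ (fst (of_nat n))) (fun n => gF (snd (of_nat n)) + gQ (fst (of_nat n)) * t)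
                HM) as (a & Ha1 & Ha2 & Ha3).
    { apply enum_span. apply (enum_sub _ (fun v => (X v \/ Y v) \/ v = t)); [tauto|].
      apply enum_add1, enum_or; auto. }
    exists (a, t - a). simpl. split; [|split; [|split; [|split]]].
    + intros (e & g & r & He & Hg & Hr & E).
      destruct (Req_EM_T (1 + r) 0) as [E0 | E0].
      * apply Ht. exists e, g. repeat split; auto.
        assert (r = -1) by lra. subst r. lra.
      * apply Ha1.
        replace a with (/ (1 + r) * (e + g) + (r / (1 + r)) * t).
        -- apply span_add.
           ++ apply span_scale. apply QRinv; auto. apply QRadd; auto using QR1.
              apply (span_XY X Y); auto.
           ++ apply span_scale. apply QRdiv; auto. apply QRadd; auto using QR1.
              apply span_incl; auto.
        -- apply Rmult_eq_reg_l with (1 + r); auto. field_simplify; auto. lra.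
    + intros (e & g & He & Hg & E). apply Ha1.
      replace a with (1 * t + (- (e + g))) by lra. constructor; auto using QR1.
      apply span_opp. apply (span_XY X Y); auto.
    + exists 0, 0, 1, 1. repeat split; auto using QR1; try constructor. ring.
    + intros e r He Hr Hr0 HU. destruct (find gE _ HgE e r He Hr) as (n & E1 & E2).
      apply (Ha2 n); rewrite ?E1, ?E2; [exact Hr0 | rewrite Rplus_comm; exact HU].
    + intros g r Hg Hr Hr0 HU. destruct (find gF _ HgF g r Hg Hr) as (n & E1 & E2).
      apply (Ha3 n); rewrite ?E1, ?E2; [lra|].
      replace (- r * a + (g + r * t)) with (g + r * (t - a)) by ring. exact HU.
Qed.


Definition step t (h : forall s, lt s t -> R * R) : R * R :=
  epsilon (inhabits (0, 0)) (fun p => Spec t (fun v => exists s (H : lt s t), v = fst (h s H))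
                                           (fun v => exists s (H : lt s t), v = snd (h s H)) (fst p) (snd p)).
Definition xy : R -> R * R := Fix lt_wf (fun _ => (R * R)%type) step.
Definition x t := fst (xy t).
Definition y t := snd (xy t).
Definition seg (w : R -> R) t := fun v => exists s, lt s t /\ v = w s.
Definition Ele (w : R -> R) t := span (fun v => exists s, le s t /\ v = w s).

Lemma xy_eq t : xy t = step t (fun s _ => xy s).
Proof.
  unfold xy.
  assert (ext : forall (t' : R) (g1 g2 : forall s, lt s t' -> R * R),
             (forall s p, g1 s p = g2 s p) -> step t' g1 = step t' g2).
  { intros t' g1 g2 H.
    assert (g1 = g2) as ->; [|reflexivity].
    apply functional_extensionality_dep; intro s; apply functional_extensionality_dep; intro p; apply H. }
  exact (Fix_eq lt_wf (fun _ => (R * R)%type) step ext t).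
Qed.

Lemma enum_seg w t : enum (seg w t).
Proof. apply enum_image. apply countable_enum, lt_cnt. Qed.

Lemma spec_xy t : Spec t (seg x t) (seg y t) (x t) (y t).
Proof.
  assert (E1 : (fun v => exists s (H : lt s t), v = fst (xy s)) = seg x t).
  { apply functional_extensionality; intro v; apply propositional_extensionality.
    unfold seg, x; split; [intros (s & H & E); eauto | intros (s & H & E); eauto]. }
  assert (E2 : (fun v => exists s (H : lt s t), v = snd (xy s)) = seg y t).
  { apply functional_extensionality; intro v; apply propositional_extensionality.
    unfold seg, y; split; [intros (s & H & E); eauto | intros (s & H & E); eauto]. }
  unfold x at 2, y at 2. rewrite xy_eq. unfold step. cbv beta. rewrite E1, E2.
  apply (epsilon_spec (inhabits (0, 0)) (fun p => Spec t (seg x t) (seg y t) (fst p) (snd p))).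
  apply spec_exists; apply enum_seg.
Qed.

Lemma le_trans a b c : le a b -> le b c -> le a c.
Proof.
  unfold le. intros [H1 | ->] [H2 | ->]; auto. left; eauto.
Qed.

Lemma Ele_mono w t1 t2 z : le t1 t2 -> Ele w t1 z -> Ele w t2 z.
Proof.
  intros H. apply span_mono. intros v (s & Hs & ->). exists s; split; auto. eapply le_trans; eauto.
Qed.

Lemma directed (w : R -> R) (P : R -> Prop) z :
  span (fun v => exists s, P s /\ v = w s) z -> z = 0 \/ exists t, P t /\ Ele w t z.
Proof.
  induction 1 as [|r v z Hr (s & Hs & ->) Hz IH]; auto.
  right. destruct IH as [-> | (t' & Ht' & Hz')].
  - exists s. split; auto. constructor; auto. exists s; split; auto. right; auto. constructor.
  - destruct (classic (s = t')) as [<- | Hne].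
    + exists s. split; auto. constructor; auto. exists s; split; auto. right; auto.
    + destruct (lt_tot s t' Hne) as [Hl | Hl].
      * exists t'. split; auto. constructor; auto. exists s; split; auto. left; auto.
      * exists s. split; auto. constructor; auto. exists s; split; auto. right; auto.
        apply (Ele_mono w t'); auto. left; auto.
Qed.

Lemma Ele_split w t z :
  Ele w t z <-> exists e r, span (seg w t) e /\ QR r /\ z = e + r * w t.
Proof.
  unfold Ele. rewrite (span_ext _ (fun v => seg w t v \/ v = w t)).
  - apply span_add1.
  - intros v; unfold seg, le; split.
    + intros (s & [H | ->] & ->); [left; eauto | right; auto].
    + intros [(s & H & ->) | ->]; eauto.
Qed.

Lemma algebra (X Y : R -> Prop) a b :
  (forall z, span X z -> span Y z -> z = 0) ->
  ~ (exists e g r, span X e /\ span Y g /\ QR r /\ a = e + g + r * b) ->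
  ~ (exists e g, span X e /\ span Y g /\ b = e + g) ->
  forall e r g q, span X e -> QR r -> span Y g -> QR q -> e + r * a = g + q * b -> e + r * a = 0.
Proof.
  intros H0 H1 H2 e r g q He Hr Hg Hq E.
  destruct (Req_EM_T r 0) as [-> | Hr0].
  - destruct (Req_EM_T q 0) as [-> | Hq0].
    + rewrite Rmult_0_l, Rplus_0_r in *. rewrite Rmult_0_l, Rplus_0_r in E.
      apply H0; auto. rewrite E; auto.
    + exfalso. apply H2. exists ((/ q) * e), ((- / q) * g). split; [|split].
      * apply span_scale; auto. apply QRinv; auto.
      * apply span_scale; auto. apply QRopp, QRinv; auto.
      * apply Rmult_eq_reg_l with q; auto. field_simplify; auto. lra.
  - exfalso. apply H1. exists ((- / r) * e), ((/ r) * g), (q / r). split; [|split; [|split]].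
    + apply span_scale; auto. apply QRopp, QRinv; auto.
    + apply span_scale; auto. apply QRinv; auto.
    + apply QRdiv; auto.
    + apply Rmult_eq_reg_l with r; auto. field_simplify; auto. lra.
Qed.

Lemma invariant t : forall z, Ele x t z -> Ele y t z -> z = 0.
Proof.
  induction t as [t IH] using (well_founded_ind lt_wf).
  intros z Hx Hy.
  apply Ele_split in Hx as (e & r & He & Hr & ->).
  apply Ele_split in Hy as (g & q & Hg & Hq & E).
  destruct (spec_xy t) as (S1 & S2 & _).
  apply (algebra (seg x t) (seg y t) (x t) (y t)) with (g := g) (q := q); auto.
  intros z' Hz1 Hz2.
  destruct (directed x (fun s => lt s t) z' Hz1) as [-> | (t1 & Ht1 & H1)]; auto.
  destruct (directed y (fun s => lt s t) z' Hz2) as [-> | (t2 & Ht2 & H2)]; auto.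
  destruct (classic (t1 = t2)) as [<- | Hne].
  - apply (IH t1); auto.
  - destruct (lt_tot t1 t2 Hne) as [Hl | Hl].
    + apply (IH t2); auto. apply (Ele_mono x t1); auto. left; auto.
    + apply (IH t1); auto. apply (Ele_mono y t2); auto. left; auto.
Qed.

Lemma rare_gen (w : R -> R)
  (HS : forall t e r, span (seg w t) e -> QR r -> r <> 0 -> ~ U t (e + r * w t)) :
  forall t' t z, Ele w t' z -> MB t z -> span (seg w t) z.
Proof.
  intros t'. induction t' as [t' IH] using (well_founded_ind lt_wf).
  intros t z Hz HM.
  destruct (classic (lt t' t)) as [Hl | Hnl].
  - unfold Ele in Hz. eapply span_mono; [|exact Hz].
    intros v (s & Hs & ->). exists s; split; auto. destruct Hs as [Hs | ->]; eauto.
  - assert (Hle : le t t').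
    { destruct (classic (t = t')) as [-> | Hne]; [right; auto|].
      destruct (lt_tot t t' Hne); [left; auto | contradiction]. }
    apply Ele_split in Hz as (e & r & He & Hr & ->).
    destruct (Req_EM_T r 0) as [-> | Hr0].
    + rewrite Rmult_0_l, Rplus_0_r in *.
      destruct (directed w (fun s => lt s t') e He) as [-> | (t1 & Ht1 & H1)]; [constructor|].
      apply (IH t1); auto.
    + exfalso. apply (HS t' e r He Hr Hr0). exists t; auto.
Qed.

Lemma x_inj s t : x s = x t -> s = t.
Proof.
  intros E. apply NNPP; intro Hne.
  destruct (lt_tot s t Hne) as [Hl | Hl].
  - destruct (spec_xy t) as (S1 & _). apply S1. exists (x s), 0, 0.
    split; [apply span_incl; exists s; auto|split; [constructor|split; [apply QR0|]]]. rewrite E; ring.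
  - destruct (spec_xy s) as (S1 & _). apply S1. exists (x t), 0, 0.
    split; [apply span_incl; exists t; auto|split; [constructor|split; [apply QR0|]]]. rewrite E; ring.
Qed.

Lemma y_inj s t : y s = y t -> s = t.
Proof.
  intros E. apply NNPP; intro Hne.
  destruct (lt_tot s t Hne) as [Hl | Hl].
  - destruct (spec_xy t) as (_ & S2 & _). apply S2. exists 0, (y s).
    split; [constructor|split; [apply span_incl; exists s; auto|]]. rewrite E; ring.
  - destruct (spec_xy s) as (_ & S2 & _). apply S2. exists 0, (y t).
    split; [constructor|split; [apply span_incl; exists t; auto|]]. rewrite E; ring.
Qed.

Definition Eall (w : R -> R) := span (fun v => exists s, v = w s).

Lemma rare_E (w : R -> R)
  (HS : forall t e r, span (seg w t) e -> QR r -> r <> 0 -> ~ U t (e + r * w t))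
  (Hinj : forall s t, w s = w t -> s = t) : rare C (Eall w).
Proof.
  split.
  - intros [h [_ Hh]]. apply (R_uncountable C pm ab).
    exists (fun t => h (w t)). split; auto. intros s t _ _ E. apply Hinj. apply Hh; auto.
    + apply span_incl; eauto.
    + apply span_incl; eauto.
  - intros M [S [HS1 HS2]].
    assert (Hc : forall n, exists t, forall z, S n z -> MB t z).
    { intros n. apply (Mb_cofinal C cb cc f f_inj); auto. }
    set (tn := fun n => proj1_sig (constructive_indefinite_description _ (Hc n))).
    assert (Htn : forall n z, S n z -> MB (tn n) z).
    { intros n. unfold tn. destruct (constructive_indefinite_description _ (Hc n)); auto. }
    apply enum_countable.
    apply (enum_sub _ (fun z => exists n, span (seg w (tn n)) z)).
    + intros z [Hz HMz]. destruct (proj1 (HS2 z) HMz) as [n Hn]. exists n.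
      assert (Hz' : span (fun v => exists s, True /\ v = w s) z).
      { eapply span_mono; [|exact Hz]. intros v [s ->]; eauto. }
      destruct (directed w (fun _ => True) z Hz') as [-> | (t' & _ & H')]; [constructor|].
      apply (rare_gen w HS t'); auto.
    + apply enum_union. intros n. apply enum_span, enum_seg.
Qed.

Lemma main_result : exists E F : R -> Prop,
    rare C E /\ rare C F /\
    Q_subspace E /\ Q_subspace F /\
    (forall z : R, exists e f, E e /\ F f /\ z = e + f) /\
    (forall z : R, (E z /\ F z) <-> z = 0).
Proof.
  assert (Qs : forall w, Q_subspace (Eall w)).
  { intros w. split; [constructor|split].
    - intros; apply span_add; auto.
    - intros q z Hz. apply span_scale; auto. exists q; auto. }
  exists (Eall x), (Eall y). split; [|split; [|split; [|split; [|split]]]].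
  - apply rare_E; [|apply x_inj]. intros t e r He Hr Hr0. destruct (spec_xy t) as (_ & _ & _ & S4 & _). auto.
  - apply rare_E; [|apply y_inj]. intros t e r He Hr Hr0. destruct (spec_xy t) as (_ & _ & _ & _ & S5). auto.
  - apply Qs.
  - apply Qs.
  - intros z. destruct (spec_xy z) as (_ & _ & (e & g & r1 & r2 & He & Hg & Hr1 & Hr2 & E) & _).
    exists (e + r1 * x z), (g + r2 * y z). split; [|split].
    + apply span_add.
      * eapply span_mono; [|exact He]. intros v (s & _ & ->); eauto.
      * apply span_scale; auto. apply span_incl; eauto.
    + apply span_add.
      * eapply span_mono; [|exact Hg]. intros v (s & _ & ->); eauto.
      * apply span_scale; auto. apply span_incl; eauto.
    + rewrite E at 1. ring.
  - intros z; split.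
    + intros [H1 H2].
      assert (H1' : span (fun v => exists s, True /\ v = x s) z).
      { eapply span_mono; [|exact H1]. intros v [s ->]; eauto. }
      assert (H2' : span (fun v => exists s, True /\ v = y s) z).
      { eapply span_mono; [|exact H2]. intros v [s ->]; eauto. }
      destruct (directed x _ z H1') as [-> | (t1 & _ & Ht1)]; auto.
      destruct (directed y _ z H2') as [-> | (t2 & _ & Ht2)]; auto.
      destruct (classic (t1 = t2)) as [<- | Hne].
      * apply (invariant t1); auto.
      * destruct (lt_tot t1 t2 Hne) as [Hl | Hl].
        -- apply (invariant t2); auto. apply (Ele_mono x t1); auto. left; auto.
        -- apply (invariant t1); auto. apply (Ele_mono y t2); auto. left; auto.
    + intros ->. split; constructor.
Qed.

End Main.

Theorem theorem2p5 (C : (R -> Prop) -> Prop) :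
  CH ->
  category_base C ->
  point_meager C ->
  ccc C ->
  linearly_invariant C ->
  card_le C (fun _ : R => True) ->
  abundant C (fun _ : R => True) ->
  exists E F : R -> Prop,
    rare C E /\ rare C F /\
    Q_subspace E /\ Q_subspace F /\
    (forall z : R, exists e f, E e /\ F f /\ z = e + f) /\
    (forall x : R, (E x /\ F x) <-> x = 0).
Proof.
  intros ch cb pm cc li [f [_ Hf]] ab.
  destruct (good_order ch) as (lt & wf & tr & irr & tot & cnt).
  eapply main_result; eauto.
Qed.
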